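(* Let $\mathbf W\in\mathbb R^{p\times d}$ and let $\sigma_1,\ldots,\sigma_p\in C^{0,1}_{\uparrow}(\mathbb R)$. Let $L_\theta$ denote the Lipschitz constant of $\mathbf x\mapsto\mathbf W^T\boldsymbol\sigma(\mathbf W\mathbf x)$, where $(\boldsymbol\sigma(\mathbf z))_i=\sigma_i(z_i)$. With $\boldsymbol\Sigma_\infty=\mathrm{diag}(\|\sigma_1'\|_\infty,\ldots,\|\sigma_p'\|_\infty)$ it holds that $$L_\theta\le\|\mathbf W^T\boldsymbol\Sigma_\infty\mathbf W\|=\|\sqrt{\boldsymbol\Sigma_\infty}\,\mathbf W\|^2\le L_{\boldsymbol\sigma}\|\mathbf W\|^2,$$ where $L_{\boldsymbol\sigma}=\max_i\mathrm{Lip}(\sigma_i)$ is the Lipschitz constant of $\boldsymbol\sigma$ and $\|\cdot\|$ is the spectral norm.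
   Context: $C^{0,1}_{\uparrow}(\mathbb R)$ denotes the set of Lipschitz-continuous increasing functions $\mathbb R\to\mathbb R$; for such $\sigma_i$, $\|\sigma_i'\|_\infty$ is the essential supremum of its derivative, i.e. its Lipschitz constant. *)

(* Defs.v *)
From HB Require Import structures.
From mathcomp Require Import all_boot all_order all_algebra.
From mathcomp Require Import all_classical all_reals.
Set Implicit Arguments. Unset Strict Implicit. Unset Printing Implicit Defensive.
Import Order.TTheory GRing.Theory Num.Theory.
Local Open Scope ring_scope.
Local Open Scope classical_set_scope.

Section Defs.
Variable R : realType.

Definition vnorm n (x : 'cV[R]_n) : R := Num.sqrt (\sum_i (x i 0) ^+ 2).

Definition specnorm m n (A : 'M[R]_(m, n)) : R :=
  sup [set vnorm (A *m x) | x in [set x : 'cV[R]_n | vnorm x <= 1]].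

Definition lipschitz_bound m n (f : 'cV[R]_n -> 'cV[R]_m) (L : R) : Prop :=
  0 <= L /\ forall x y, vnorm (f x - f y) <= L * vnorm (x - y).
Definition lipconst m n (f : 'cV[R]_n -> 'cV[R]_m) : R :=
  inf [set L | lipschitz_bound f L].

Definition lipschitz_bound1 (f : R -> R) (L : R) : Prop :=
  0 <= L /\ forall x y, `|f x - f y| <= L * `|x - y|.
Definition lipconst1 (f : R -> R) : R := inf [set L | lipschitz_bound1 f L].

Definition lip_incr (f : R -> R) : Prop :=
  (exists L, lipschitz_bound1 f L) /\ {homo f : x y / x <= y}.

Definition sigmav p (sigma : 'I_p -> R -> R) (z : 'cV[R]_p) : 'cV[R]_p :=
  \col_i sigma i (z i 0).

(* Sigma_infty = diag(||sigma_i'||_infty) = diag(Lip(sigma_i)) *)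
Definition Sigma_inf p (sigma : 'I_p -> R -> R) : 'M[R]_p :=
  diag_mx (\row_i lipconst1 (sigma i)).
Definition sqrt_Sigma_inf p (sigma : 'I_p -> R -> R) : 'M[R]_p :=
  diag_mx (\row_i Num.sqrt (lipconst1 (sigma i))).

Definition Lsigma p (sigma : 'I_p -> R -> R) : R :=
  \big[Num.max/0]_(i < p) lipconst1 (sigma i).
End Defs.

(* Main.v *)
Require Import Defs.
From HB Require Import structures.
From mathcomp Require Import all_boot all_order all_algebra.
From mathcomp Require Import all_classical all_reals.
From mathcomp Require Import ring lra.
Import Order.TTheory GRing.Theory Num.Theory.
Local Open Scope ring_scope.

Local Open Scope classical_set_scope.

Definition dot {R : realType} {n} (x y : 'cV[R]_n) : R := \sum_i x i 0 * y i 0.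

Lemma dot_ge0 {R : realType} {n} (x : 'cV[R]_n) : 0 <= dot x x.
Proof. by apply: sumr_ge0 => i _; rewrite -expr2 sqr_ge0. Qed.

Lemma vnormE {R : realType} {n} (x : 'cV[R]_n) : vnorm x = Num.sqrt (dot x x).
Proof. by rewrite /vnorm /dot; under eq_bigr do rewrite expr2. Qed.

Lemma vnorm_ge0 {R : realType} {n} (x : 'cV[R]_n) : 0 <= vnorm x.
Proof. exact: sqrtr_ge0. Qed.

Lemma vnorm_sq {R : realType} {n} (x : 'cV[R]_n) : vnorm x ^+ 2 = dot x x.
Proof. by rewrite vnormE sqr_sqrtr // dot_ge0. Qed.

Lemma dot_tr {R : realType} {m n} (N : 'M[R]_(m, n)) x y :
  dot (N *m x) y = dot x (N^T *m y).
Proof.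
rewrite /dot.
under eq_bigr do rewrite mxE big_distrl /=.
rewrite exchange_big /=; apply: eq_bigr => j _.
rewrite mxE big_distrr /=; apply: eq_bigr => i _.
by rewrite mxE; ring.
Qed.

Lemma dotC {R : realType} {n} (x y : 'cV[R]_n) : dot x y = dot y x.
Proof. by apply: eq_bigr => i _; rewrite mulrC. Qed.

Lemma dot_quad {R : realType} {n} (x y : 'cV[R]_n) (t : R) :
  dot (x + t *: y) (x + t *: y) = dot x x + 2 * t * dot x y + t ^+ 2 * dot y y.
Proof.
rewrite /dot mulr_sumr mulr_sumr -!big_split /=; apply: eq_bigr => i _.
rewrite !mxE; ring.
Qed.

Lemma CS2 {R : realType} {n} (x y : 'cV[R]_n) : dot x y ^+ 2 <= dot x x * dot y y.
Proof.
have [y0|yp] := eqVneq (dot y y) 0.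
  have hy : forall i, y i 0 = 0.
    move=> i; have := y0; rewrite /dot => /eqP; rewrite psumr_eq0; last first.
      by move=> j _; rewrite -expr2 sqr_ge0.
    by move=> /allP /(_ i (mem_index_enum _)) /=; rewrite mulf_eq0 orbb => /eqP.
  have -> : dot x y = 0 by rewrite /dot big1 // => i _; rewrite hy mulr0.
  by rewrite y0 expr0n mulr0.
have ypos : 0 < dot y y by rewrite lt_def yp dot_ge0.
have := dot_ge0 (x + (- (dot x y / dot y y)) *: y).
rewrite dot_quad => h.
have : 0 <= (dot x x + 2 * - (dot x y / dot y y) * dot x y +
      (- (dot x y / dot y y)) ^+ 2 * dot y y) * dot y y by rewrite mulr_ge0 // ltW.
have -> : (dot x x + 2 * - (dot x y / dot y y) * dot x y +
      (- (dot x y / dot y y)) ^+ 2 * dot y y) * dot y y =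
      dot x x * dot y y - dot x y ^+ 2.
  by field; rewrite yp.
by rewrite subr_ge0.
Qed.

Lemma CS {R : realType} {n} (x y : 'cV[R]_n) : dot x y <= vnorm x * vnorm y.
Proof.
have h0 : 0 <= vnorm x * vnorm y by rewrite mulr_ge0 ?vnorm_ge0.
have [hn|hp] := lerP (dot x y) 0; first exact: le_trans hn h0.
rewrite -(ler_sqr (ltW hp) h0) ?inE ?(ltW hp) // exprMn !vnorm_sq.
exact: CS2.
Qed.

Lemma dotZ {R : realType} {n} (c : R) (x : 'cV[R]_n) :
  dot (c *: x) (c *: x) = c ^+ 2 * dot x x.
Proof. rewrite /dot mulr_sumr; apply: eq_bigr => i _; rewrite !mxE; ring. Qed.

Lemma vnormZ {R : realType} {n} (c : R) (x : 'cV[R]_n) :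
  vnorm (c *: x) = `|c| * vnorm x.
Proof. by rewrite !vnormE dotZ sqrtrM ?sqr_ge0 // sqrtr_sqr. Qed.

Lemma vnorm0P {R : realType} {n} (x : 'cV[R]_n) : vnorm x = 0 -> x = 0.
Proof.
move=> h; have : dot x x = 0 by rewrite -vnorm_sq h expr0n.
rewrite /dot => /eqP; rewrite psumr_eq0; last by move=> j _; rewrite -expr2 sqr_ge0.
move=> /allP hx; apply/matrixP => i j; rewrite (ord1 j) mxE.
by have := hx i (mem_index_enum _); rewrite /= mulf_eq0 orbb => /eqP.
Qed.

Lemma vnorm0 {R : realType} {n} : vnorm (0 : 'cV[R]_n) = 0.
Proof. by rewrite vnormE /dot big1 ?sqrtr0 // => i _; rewrite mxE mul0r. Qed.

Definition frob {R : realType} {m n} (N : 'M[R]_(m, n)) : R :=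
  Num.sqrt (\sum_i \sum_j N i j ^+ 2).

Lemma frob_bound {R : realType} {m n} (N : 'M[R]_(m, n)) x :
  vnorm (N *m x) <= frob N * vnorm x.
Proof.
rewrite vnormE /frob vnormE -sqrtrM; last first.
  by apply: sumr_ge0 => i _; apply: sumr_ge0 => j _; rewrite sqr_ge0.
rewrite ler_sqrt; last first.
  rewrite mulr_ge0 ?dot_ge0 //.
  by apply: sumr_ge0 => i _; apply: sumr_ge0 => j _; rewrite sqr_ge0.
rewrite mulr_suml /dot; apply: ler_sum => i _.
have -> : (N *m x) i 0 = dot (row i N)^T x.
  by rewrite mxE; apply: eq_bigr => j _; rewrite !mxE.
rewrite -expr2 (le_trans (CS2 _ _)) // ler_wpM2r ?dot_ge0 //.
by rewrite /dot le_eqVlt; apply/orP; left; apply/eqP; apply: eq_bigr => j _; rewrite !mxE expr2.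
Qed.

Lemma specnorm_set_sup {R : realType} {m n} (N : 'M[R]_(m, n)) :
  has_sup [set vnorm (N *m x) | x in [set x : 'cV[R]_n | vnorm x <= 1]].
Proof.
split; first by exists (vnorm (N *m 0)), 0 => //=; rewrite vnorm0.
exists (frob N) => _ [x /= hx <-].
rewrite (le_trans (frob_bound _ _)) // ler_piMr // ?sqrtr_ge0.
by [].
Qed.

Lemma specnorm_ge0 {R : realType} {m n} (N : 'M[R]_(m, n)) : 0 <= specnorm N.
Proof.
apply: le_trans (sup_upper_bound (specnorm_set_sup N) _).
  exact: vnorm_ge0 (N *m 0).
by exists 0 => //=; rewrite vnorm0.
Qed.

Lemma specnorm_bound {R : realType} {m n} (N : 'M[R]_(m, n)) x :
  vnorm (N *m x) <= specnorm N * vnorm x.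
Proof.
have [x0|xp] := eqVneq (vnorm x) 0.
  by rewrite (vnorm0P x x0) mulmx0 !vnorm0 mulr0.
have xpos : 0 < vnorm x by rewrite lt_def xp vnorm_ge0.
have h : vnorm (N *m ((vnorm x)^-1 *: x)) <= specnorm N.
  apply: sup_upper_bound (specnorm_set_sup N) _ _.
  exists ((vnorm x)^-1 *: x) => //=.
  by rewrite vnormZ ger0_norm ?invr_ge0 ?vnorm_ge0 // mulVf.
rewrite -ler_pdivrMr //; move: h; rewrite -scalemxAr vnormZ ger0_norm ?invr_ge0 ?vnorm_ge0 //.
by rewrite mulrC.
Qed.

Lemma specnorm_le {R : realType} {m n} (N : 'M[R]_(m, n)) c :
  0 <= c -> (forall x, vnorm (N *m x) <= c * vnorm x) -> specnorm N <= c.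
Proof.
move=> c0 h; apply: ge_sup; first by exists (vnorm (N *m 0)), 0 => //=; rewrite vnorm0.
move=> _ [x /= hx <-]; apply: le_trans (h x) _.
by rewrite ler_piMr.
Qed.

Lemma sq_le_aux {R : realType} (a b : R) : 0 <= a -> 0 <= b -> a ^+ 2 <= b * a -> a <= b.
Proof.
move=> a0 b0 h; have [->|ap] := eqVneq a 0; first by [].
have apos : 0 < a by rewrite lt_def ap a0.
by rewrite -(ler_pM2r apos) -expr2.
Qed.

Lemma sq_le_sqrt {R : realType} (a b : R) : 0 <= a -> 0 <= b -> a ^+ 2 <= b -> a <= Num.sqrt b.
Proof.
move=> a0 b0 h; rewrite -(ler_sqr a0 (sqrtr_ge0 b)) ?inE ?sqrtr_ge0 //.
by rewrite sqr_sqrtr.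
Qed.

Lemma specnorm_tr {R : realType} {m n} (N : 'M[R]_(m, n)) : specnorm N^T <= specnorm N.
Proof.
apply: specnorm_le; first exact: specnorm_ge0.
move=> y; apply: sq_le_aux; first exact: vnorm_ge0.
  by rewrite mulr_ge0 ?specnorm_ge0 ?vnorm_ge0.
rewrite vnorm_sq -dot_tr.
apply: le_trans (CS _ _) _.
rewrite mulrAC ler_wpM2r ?vnorm_ge0 //.
exact: specnorm_bound.
Qed.

Lemma cstar {R : realType} {m n} (N : 'M[R]_(m, n)) :
  specnorm (N^T *m N) = specnorm N ^+ 2.
Proof.
apply/eqP; rewrite eq_le; apply/andP; split.
  apply: specnorm_le; first by rewrite sqr_ge0.
  move=> x; rewrite -mulmxA; apply: le_trans (specnorm_bound _ _) _.
  apply: le_trans (ler_wpM2l (specnorm_ge0 _) (specnorm_bound _ _)) _.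
  rewrite mulrA expr2 ler_wpM2r ?vnorm_ge0 // ler_wpM2r ?specnorm_ge0 //.
  exact: specnorm_tr.
have h : specnorm N <= Num.sqrt (specnorm (N^T *m N)).
  apply: specnorm_le; first exact: sqrtr_ge0.
  move=> x.
  have hs : vnorm (N *m x) ^+ 2 <= (Num.sqrt (specnorm (N^T *m N)) * vnorm x) ^+ 2.
    rewrite exprMn (sqr_sqrtr (specnorm_ge0 _)) vnorm_sq dot_tr mulmxA.
    apply: le_trans (CS _ _) _.
    rewrite mulrC expr2 mulrA ler_wpM2r ?vnorm_ge0 //.
    exact: specnorm_bound.
  by move: hs; rewrite ler_sqr // ?nnegrE ?mulr_ge0 ?sqrtr_ge0 ?vnorm_ge0.
rewrite -(sqr_sqrtr (specnorm_ge0 (N^T *m N))).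
by rewrite ler_sqr // ?nnegrE ?specnorm_ge0 ?sqrtr_ge0.
Qed.

Lemma lip_ge0 {R : realType} (f : R -> R) : lip_incr f -> 0 <= lipconst1 f.
Proof.
move=> [[L hL] _]; apply: lb_le_inf; first by exists L.
by move=> M [].
Qed.

Lemma lip_bound {R : realType} (f : R -> R) a b : lip_incr f ->
  `|f a - f b| <= lipconst1 f * `|a - b|.
Proof.
move=> hf; have [->|ab] := eqVneq a b; first by rewrite !subrr normr0 mulr0.
have hp : 0 < `|a - b| by rewrite normr_gt0 subr_eq0.
rewrite -ler_pdivrMr //; apply: lb_le_inf; first by case: hf => -[L hL] _; exists L.
by move=> L [_ h]; rewrite ler_pdivrMr.
Qed.

Lemma diag_entry {R : realType} {n} (r : 'rV[R]_n) (y : 'cV[R]_n) i :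
  (diag_mx r *m y) i 0 = r 0 i * y i 0.
Proof. by rewrite mul_diag_mx mxE. Qed.

Lemma diag_cmp {R : realType} {n} (r r' : 'rV[R]_n) (y : 'cV[R]_n) :
  (forall i, r 0 i ^+ 2 <= r' 0 i ^+ 2) ->
  vnorm (diag_mx r *m y) <= vnorm (diag_mx r' *m y).
Proof.
move=> h; rewrite /vnorm ler_sqrt; last by apply: sumr_ge0 => i _; rewrite sqr_ge0.
apply: ler_sum => i _; rewrite !diag_entry !exprMn ler_wpM2r ?sqr_ge0 //.
Qed.

Lemma Lsigma_ge0 {R : realType} {p} (sigma : 'I_p -> R -> R) : 0 <= Lsigma sigma.
Proof. exact: bigmax_ge_id. Qed.

Lemma le_Lsigma {R : realType} {p} (sigma : 'I_p -> R -> R) i :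
  lipconst1 (sigma i) <= Lsigma sigma.
Proof. exact: (le_bigmax _ (fun i => lipconst1 (sigma i))). Qed.

Lemma quot_facts {R : realType} (f : R -> R) a b : lip_incr f ->
  let q := (f a - f b) / (a - b) in
  [/\ 0 <= q, q * (a - b) = f a - f b & q <= lipconst1 f].
Proof.
move=> hf q; have hb := lip_bound f a b hf.
have hl := lip_ge0 f hf.
have uz : 0 <= (f a - f b) * (a - b).
  have [ab|ba] := lerP a b.
    by rewrite mulr_le0 // subr_le0 //; case: hf => _; apply.
  by rewrite mulr_ge0 // subr_ge0 //; [case: hf => _; apply; exact: ltW | exact: ltW].
have [z0|zn] := eqVneq (a - b) 0.
  have u0 : f a - f b = 0.
    by apply/eqP; rewrite -normr_le0; move: hb; rewrite z0 normr0 mulr0.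
  by rewrite /q z0 u0 invr0 mulr0 mul0r.
split.
- have -> : q = (f a - f b) * (a - b) / ((a - b) ^+ 2) by rewrite /q; field.
  by rewrite divr_ge0 // sqr_ge0.
- by rewrite /q divfK.
- apply: le_trans (ler_norm q) _.
  rewrite /q normrM normrV ?unitfE // ler_pdivrMr ?normr_gt0 //.
Qed.

Lemma claim1 {R : realType} {p d} (W : 'M[R]_(p, d)) (sigma : 'I_p -> R -> R)
  (hsigma : forall i, lip_incr (sigma i)) :
  lipschitz_bound (fun x : 'cV[R]_d => W^T *m sigmav sigma (W *m x))
    (specnorm (sqrt_Sigma_inf sigma *m W) ^+ 2).
Proof.
split; first exact: sqr_ge0.
move=> x y /=.
rewrite -mulmxBr.
set a := W *m x; set b := W *m y.
set u := sigmav sigma a - sigmav sigma b.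
pose q i := (sigma i (a i 0) - sigma i (b i 0)) / (a i 0 - b i 0).
have hq i := quot_facts (sigma i) (a i 0) (b i 0) (hsigma i).
pose r := \row_i Num.sqrt (q i).
pose M := diag_mx r *m W.
have hM : W^T *m u = M^T *m (M *m (x - y)).
  rewrite /M trmx_mul tr_diag_mx !mulmxA -[W^T *m diag_mx r *m diag_mx r]mulmxA mulmx_diag.
  rewrite -!mulmxA; congr (_ *m _); apply/matrixP => i j; rewrite (ord1 j) diag_entry.
  rewrite (_ : (W *m (x - y)) i 0 = a i 0 - b i 0); last by rewrite mulmxBr !mxE.
  rewrite (_ : u i 0 = sigma i (a i 0) - sigma i (b i 0)); last by rewrite !mxE.
  have hqe : q i * (a i 0 - b i 0) = sigma i (a i 0) - sigma i (b i 0) by case: (hq i).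
  have hq0 : 0 <= q i by case: (hq i).
  rewrite -hqe; congr (_ * _).
  by rewrite [RHS]mxE [r 0 i]mxE -expr2 sqr_sqrtr.
have hMS : specnorm M <= specnorm (sqrt_Sigma_inf sigma *m W).
  apply: specnorm_le; first exact: specnorm_ge0.
  move=> v; apply: le_trans (specnorm_bound _ _).
  rewrite -!mulmxA; apply: diag_cmp => i.
  have [hq0 _ hql] := hq i.
  rewrite [r 0 i]mxE [X in _ <= X ^+ 2]mxE !sqr_sqrtr //.
  exact: lip_ge0.
rewrite hM; apply: le_trans (specnorm_bound _ _) _.
apply: le_trans (ler_wpM2l (specnorm_ge0 _) (specnorm_bound _ _)) _.
rewrite mulrA; apply: ler_wpM2r; first exact: vnorm_ge0.
rewrite expr2; apply: ler_pM; [exact: specnorm_ge0 | exact: specnorm_ge0 | | exact: hMS].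
exact: le_trans (specnorm_tr M) hMS.
Qed.

Local Close Scope classical_set_scope.

Lemma claim2_eq {R : realType} {p d} (W : 'M[R]_(p, d)) (sigma : 'I_p -> R -> R)
  (hsigma : forall i, lip_incr (sigma i)) :
  W^T *m Sigma_inf sigma *m W = (sqrt_Sigma_inf sigma *m W)^T *m (sqrt_Sigma_inf sigma *m W).
Proof.
rewrite trmx_mul /sqrt_Sigma_inf tr_diag_mx !mulmxA.
rewrite -[in RHS](mulmxA W^T) mulmx_diag /Sigma_inf.
congr (_ *m diag_mx _ *m _); apply/matrixP => i j; rewrite (ord1 i) !mxE -expr2 sqr_sqrtr //.
exact: lip_ge0.
Qed.

Lemma claim3 {R : realType} {p d} (W : 'M[R]_(p, d)) (sigma : 'I_p -> R -> R)
  (hsigma : forall i, lip_incr (sigma i)) :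
  specnorm (sqrt_Sigma_inf sigma *m W) <= Num.sqrt (Lsigma sigma) * specnorm W.
Proof.
apply: specnorm_le; first by rewrite mulr_ge0 ?sqrtr_ge0 ?specnorm_ge0.
move=> x; rewrite -mulmxA.
have h1 : vnorm (sqrt_Sigma_inf sigma *m (W *m x)) <=
          vnorm (diag_mx (\row_i Num.sqrt (Lsigma sigma)) *m (W *m x)).
  apply: diag_cmp => i; rewrite !mxE !sqr_sqrtr ?Lsigma_ge0 ?lip_ge0 //.
  exact: le_Lsigma.
apply: le_trans h1 _.
have -> : diag_mx (\row_i Num.sqrt (Lsigma sigma)) *m (W *m x) =
          Num.sqrt (Lsigma sigma) *: (W *m x).
  by apply/matrixP => i j; rewrite (ord1 j) diag_entry !mxE.
rewrite vnormZ ger0_norm ?sqrtr_ge0 // -mulrA ler_wpM2l ?sqrtr_ge0 //.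
exact: specnorm_bound.
Qed.

Theorem proposition5 (R : realType) (p d : nat) (W : 'M[R]_(p, d))
  (sigma : 'I_p -> R -> R) (hsigma : forall i, lip_incr (sigma i)) :
  let L_theta := lipconst (fun x : 'cV[R]_d => W^T *m sigmav sigma (W *m x)) in
  L_theta <= specnorm (W^T *m Sigma_inf sigma *m W)
  /\ specnorm (W^T *m Sigma_inf sigma *m W) = specnorm (sqrt_Sigma_inf sigma *m W) ^+ 2
  /\ specnorm (sqrt_Sigma_inf sigma *m W) ^+ 2 <= Lsigma sigma * specnorm W ^+ 2.
Proof.
move=> L_theta.
have c2 : specnorm (W^T *m Sigma_inf sigma *m W) = specnorm (sqrt_Sigma_inf sigma *m W) ^+ 2.
  by rewrite claim2_eq // cstar.
split; last split => //.
  rewrite c2 /L_theta /lipconst; apply: (ge_inf _ (claim1 W sigma hsigma)).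
  by exists 0 => L [].
have := claim3 W sigma hsigma.
rewrite -(ler_sqr) ?nnegrE ?mulr_ge0 ?sqrtr_ge0 ?specnorm_ge0 //.
by rewrite exprMn sqr_sqrtr ?Lsigma_ge0.
Qed.
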